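(* Let $K=\mathbb{F}_2(t)$, so that the completion at the infinite place is $K_{t^{-1}}=\mathbb{F}_2((t^{-1}))$. Write $y\in K_{t^{-1}}$ as $y=\sum_{i\le N}a_it^i$ with $N\in\mathbb{Z}$ and $a_i\in\mathbb{F}_2$, setting $a_i=0$ for $i>N$. Then the conic $C_y: x_0^2+x_0x_1+yx_1^2=tx_2^2$ has a $K_{t^{-1}}$-point if and only if $a_0=0$. *)

(* Defs.v *)
(* Concrete model of K_{t^-1} = F_2((t^-1)) (formal Laurent
   series in t^-1 over F_2, with F_2 represented by bool: + is xor, * is &&). *)
From mathcomp Require Import all_boot all_order all_algebra.
Set Implicit Arguments. Unset Strict Implicit. Unset Printing Implicit Defensive.
Import Order.TTheory GRing.Theory Num.Theory.

(* LSer N d represents  y = sum_{k >= 0} d k * t^(N - k)  *)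
Record lser := LSer { lead : int; dig : nat -> bool }.

Definition coef (x : lser) (i : int) : bool :=
  if (i <= lead x)%R then dig x `|(lead x - i)%R|%N else false.

Definition lseq (x y : lser) : Prop := forall i : int, coef x i = coef y i.

Definition lzero : lser := LSer 0%R (fun _ => false).
Definition lt_ : lser := LSer 1%R (fun k => k == 0%N).

Definition ladd (x y : lser) : lser :=
  let M := Num.max (lead x) (lead y) in
  LSer M (fun k => addb (coef x (M - k%:Z)%R) (coef y (M - k%:Z)%R)).

Definition lmul (x y : lser) : lser :=
  LSer (lead x + lead y)%R
       (fun k => \big[addb/false]_(j < k.+1) (dig x j && dig y (k - j))).

Definition lnonzero (x : lser) : Prop := exists i : int, coef x i = true.

Definition conic_has_point (y : lser) : Prop :=
  exists x0 x1 x2 : lser,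
    (lnonzero x0 \/ lnonzero x1 \/ lnonzero x2) /\
    lseq (ladd (ladd (lmul x0 x0) (lmul x0 x1)) (lmul y (lmul x1 x1)))
         (lmul lt_ (lmul x2 x2)).

(* Main.v *)
Require Import Defs.
From mathcomp Require Import all_boot all_order all_algebra.
From mathcomp Require Import zify ring.
From Stdlib Require Import Classical_Prop.
Set Implicit Arguments. Unset Strict Implicit. Unset Printing Implicit Defensive.
Import Order.TTheory GRing.Theory Num.Theory.
Lemma xor_sym k (f : nat -> bool) : (forall j, j <= k -> f j = f (k - j)) ->
  \big[addb/false]_(j < k.+1) f j = if odd k then false else f k./2.
Proof.
elim/ltn_ind: k f => -[|[|k]] IH f hf.
- by rewrite big_ord_recl big_ord0 addbF.
- rewrite big_ord_recl big_ord_recl big_ord0 /= addbF.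
  by rewrite (hf 1) //; case: (f 0).
- rewrite big_ord_recl big_ord_recr /=.
  rewrite (IH k _ (fun j => f j.+1)) //; last first.
    move=> j hj; rewrite hf; last lia.
    congr f; lia.
  have -> : f k.+2 = f 0 by rewrite (hf 0) // subn0.


  by rewrite negbK addbC -addbA addbb addbF.
Qed.

Local Open Scope ring_scope.

Lemma int_split (L i : int) : i <= L -> exists k : nat, i = L - k%:Z.
Proof. move=> h; exists `|L - i|%N; lia. Qed.

Lemma coef_lead (a : lser) (k : nat) : coef a (lead a - k%:Z) = dig a k.
Proof.
rewrite /coef ifT; last lia.
congr dig; lia.
Qed.

Lemma coef_gt (a : lser) i : lead a < i -> coef a i = false.
Proof. move=> h; rewrite /coef ifF //; lia. Qed.

Lemma coef_ladd x y i : coef (ladd x y) i = coef x i (+) coef y i.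
Proof.
rewrite /coef /=; case: ifP => h.
  have -> : Num.max (lead x) (lead y) - Posz `|Num.max (lead x) (lead y) - i|%N = i by lia.
  by [].
by rewrite !ifF //; lia.
Qed.

Lemma lead_ladd x y F : lead x <= F -> lead y <= F -> lead (ladd x y) <= F.
Proof. rewrite /=; lia. Qed.

Local Open Scope ring_scope.

Lemma coef_sq (a : lser) (m : int) : coef (lmul a a) (m + m) = coef a m.
Proof.
case: (lerP m (lead a)) => h; last first.
  by rewrite !coef_gt //= ; lia.
have [k ->] := int_split h.
rewrite (_ : _ + _ = lead (lmul a a) - (k + k)%N%:Z); last by rewrite /=; lia.
rewrite !coef_lead /=.
rewrite (@xor_sym (k + k) (fun j => dig a j && dig a (k + k - j))%N); last first.
  move=> j hj; rewrite andbC; congr andb; congr dig; lia.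
rewrite addnn odd_double half_double.
by rewrite (_ : (k.*2 - k = k)%N) ?andbb //; lia.
Qed.

Lemma coef_sq_odd (a : lser) (m : int) : coef (lmul a a) (m + m + 1) = false.
Proof.
case: (lerP m (lead a - 1)) => h; last first.
  by rewrite !coef_gt //= ; lia.
have [k ->] := int_split h.
rewrite (_ : _ + _ = lead (lmul a a) - (k + k).+1%N%:Z); last by rewrite /=; lia.
rewrite !coef_lead /=.
rewrite (@xor_sym (k + k).+1 (fun j => dig a j && dig a ((k + k).+1 - j))%N); last first.
  move=> j hj; rewrite andbC; congr andb; congr dig; lia.
by rewrite /= addnn odd_double.
Qed.

Lemma coef_tmul (b : lser) i : coef (lmul lt_ b) i = coef b (i - 1).
Proof.
case: (lerP i (lead (lmul lt_ b))) => h; last first.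
  by rewrite !coef_gt //= ; move: h => /=; lia.
have [k ->] := int_split h.
rewrite coef_lead (_ : _ - 1 = lead b - k%:Z); last by rewrite /=; lia.
rewrite coef_lead /= big_ord_recl /= subn0.
rewrite big1 ?addbF // => j _; by [].
Qed.

Lemma coef_mul_unit (a e : lser) i : lead e = 0 -> (forall k, dig e k = (k == 0)%N) ->
  coef (lmul a e) i = coef a i.
Proof.
move=> he hd.
case: (lerP i (lead (lmul a e))) => h; last first.
  by rewrite !coef_gt //= ; move: h => /=; rewrite he; lia.
have [k ->] := int_split h.
rewrite coef_lead /= he addr0 coef_lead big_ord_recr /= subnn hd eqxx andbT.
rewrite big1 ?addFb // => j _; rewrite hd.
rewrite (_ : (k - j == 0)%N = false) ?andbF //.
have := ltn_ord j; lia.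
Qed.

Local Open Scope ring_scope.

Definition emb (b : bool) : 'F_2 := (b : nat)%:R.
Definition tr K (p : {poly 'F_2}) : {poly 'F_2} := \poly_(k < K) p`_k.
Definition phi (F : int) K (a : lser) : {poly 'F_2} :=
  \poly_(k < K) emb (coef a (F - k%:Z)).

Lemma emb_add a b : emb (a (+) b) = emb a + emb b.
Proof. by case: a; case: b; rewrite /emb /= ?addr0 ?add0r //; apply/val_inj. Qed.

Lemma emb_and a b : emb (a && b) = emb a * emb b.
Proof. by case: a; case: b; rewrite /emb /= ?mulr0 ?mul0r ?mulr1. Qed.

Lemma emb_inj a b : emb a = emb b -> a = b.
Proof. by case: a; case: b => //= /(congr1 val). Qed.

Lemma emb_big n (F : 'I_n -> bool) :
  emb (\big[addb/false]_(j < n) F j) = \sum_(j < n) emb (F j).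
Proof.
elim/big_rec2: _ => [|j x y _ <-]; first by [].
by rewrite emb_add.
Qed.

Lemma two0 (p : {poly 'F_2}) : p + p = 0.
Proof.
by rewrite -mulr2n -mulr_natl (_ : 2%:R = 0 :> {poly 'F_2}) ?mul0r // -polyC_natr; congr polyC; apply/val_inj.
Qed.

Lemma trE K p k : (tr K p)`_k = if (k < K)%N then p`_k else 0.
Proof. by rewrite coef_poly. Qed.

Lemma trMl K p q : tr K (tr K p * q) = tr K (p * q).
Proof.
apply/polyP=> k; rewrite !trE; case: ifP => // hk.
rewrite !coefM; apply: eq_bigr => j _; rewrite trE ifT //.
have := ltn_ord j; lia.
Qed.

Lemma trMr K p q : tr K (p * tr K q) = tr K (p * q).
Proof. by rewrite mulrC trMl mulrC. Qed.

Lemma trD K p q : tr K (p + q) = tr K p + tr K q.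
Proof. by apply/polyP=> k; rewrite coefD !trE coefD; case: ifP; rewrite ?addr0. Qed.

Lemma trtr K p : tr K (tr K p) = tr K p.
Proof. by apply/polyP=> k; rewrite !trE; case: (k < K)%N. Qed.

Lemma tr_phi F K a : tr K (phi F K a) = phi F K a.
Proof. by apply/polyP=> k; rewrite trE !coef_poly; case: (k < K)%N. Qed.

Lemma phi_add F K a b : phi F K (ladd a b) = phi F K a + phi F K b.
Proof.
by apply/polyP=> k; rewrite coefD !coef_poly; case: ifP; rewrite ?addr0 // coef_ladd emb_add.
Qed.

Lemma phi_lseq F K a b : lseq a b -> phi F K a = phi F K b.
Proof. by move=> h; apply/polyP=> k; rewrite !coef_poly h. Qed.

Lemma phi_shift F G (d : nat) K a : lead a <= F -> G = F + d%:Z ->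
  phi G K a = tr K ('X^d * phi F K a).
Proof.
move=> hF ->; apply/polyP=> k; rewrite trE coef_poly; case: ifP => // hk.
rewrite coefXnM; case: ifP => hd.
  rewrite coef_gt //; lia.
rewrite coef_poly ifT; last lia.
congr emb; congr coef; lia.
Qed.

Lemma phi_mul_exact K a b :
  phi (lead a + lead b) K (lmul a b) = tr K (phi (lead a) K a * phi (lead b) K b).
Proof.
apply/polyP=> k; rewrite trE coef_poly; case: ifP => // hk.
rewrite (_ : lead a + lead b = lead (lmul a b)) // coef_lead /= emb_big coefM.
apply: eq_bigr => j _; rewrite emb_and !coef_poly !ifT ?coef_lead //.
  have := ltn_ord j; lia.
have := ltn_ord j; lia.
Qed.

Lemma phi_mul F1 F2 F K a b : lead a <= F1 -> lead b <= F2 -> F = F1 + F2 ->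
  phi F K (lmul a b) = tr K (phi F1 K a * phi F2 K b).
Proof.
move=> h1 h2 ->.
have [d1 e1] : exists d : nat, F1 = lead a + d%:Z by exists `|F1 - lead a|%N; lia.
have [d2 e2] : exists d : nat, F2 = lead b + d%:Z by exists `|F2 - lead b|%N; lia.
rewrite (@phi_shift (lead (lmul a b)) _ (d1 + d2)) //=; last lia.
rewrite phi_mul_exact trMr.
rewrite (@phi_shift (lead a) F1 d1) // (@phi_shift (lead b) F2 d2) //.
rewrite trMl trMr; congr tr; rewrite exprD; ring.
Qed.

Lemma lseq_of_phi F a b : lead a <= F -> lead b <= F ->
  (forall K, phi F K a = phi F K b) -> lseq a b.
Proof.
move=> ha hb h i; case: (lerP i F) => hi; last by rewrite !coef_gt //; lia.
have [k ->] := int_split hi.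
have := congr1 (fun p : {poly 'F_2} => p`_k) (h k.+1).
by rewrite !coef_poly ltnSn => /emb_inj.
Qed.

Lemma lmul_congr a a' b b' : lseq a a' -> lseq b b' -> lseq (lmul a b) (lmul a' b').
Proof.
move=> ha hb.
apply: (@lseq_of_phi (Num.max (lead a) (lead a') + Num.max (lead b) (lead b'))) => /=; try lia.
move=> K.
rewrite (@phi_mul (Num.max (lead a) (lead a')) (Num.max (lead b) (lead b'))) //; try lia.
rewrite (@phi_mul (Num.max (lead a) (lead a')) (Num.max (lead b) (lead b')) _ _ a') //; try lia.
by rewrite (phi_lseq _ _ ha) (phi_lseq _ _ hb).
Qed.

Local Open Scope ring_scope.

Fixpoint pp (a : int -> bool) (f n : nat) : bool :=
  match f with 0%N => false | f'.+1 => a (Posz n.*2) (+) pp a f' n.*2 end.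
Fixpoint gg (a : int -> bool) (f m : nat) : bool :=
  match f with 0%N => false | f'.+1 => if odd m then false else a (- Posz m) (+) gg a f' m./2 end.

Definition zc a B (n : int) : bool :=
  match n with Posz n => if n == 0%N then false else pp a B n | Negz m => gg a m.+1 m.+1 end.
Definition wc a B (m : int) : bool := a (m + m + 1) (+) zc a B (m + m + 1).

Lemma gg_S a f m : gg a f.+1 m = if odd m then false else a (- Posz m) (+) gg a f m./2.
Proof. by []. Qed.

Lemma gg_S_even a f m : ~~ odd m -> gg a f.+1 m = a (- Posz m) (+) gg a f m./2.
Proof. by move=> h; rewrite gg_S (negbTE h). Qed.

Section Constr.
Variable (a : int -> bool) (N : int).
Hypothesis hN : forall i, N < i -> a i = false.

Lemma pp_zero f n : N < Posz n -> pp a f n = false.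
Proof.
elim: f n => [|f IH] n hn //=.
by rewrite hN ?IH //; lia.
Qed.

Lemma pp_stable f n : (0 < n)%N -> N < Posz (2 ^ f.+1 * n) -> pp a f.+1 n = pp a f n.
Proof.
elim: f n => [|f IH] n hn h.
  by rewrite /= hN //; lia.
have e1 : pp a f.+2 n = a (Posz n.*2) (+) pp a f.+1 n.*2 by [].
have e2 : pp a f.+1 n = a (Posz n.*2) (+) pp a f n.*2 by [].
rewrite e1 e2 IH //; last first.
  by rewrite (_ : (2 ^ f.+1 * n.*2 = 2 ^ f.+2 * n)%N) //; rewrite !expnS; nia.
by rewrite double_gt0.
Qed.

Lemma gg_stable f1 f2 m : (0 < m)%N -> (m <= f1)%N -> (m <= f2)%N -> gg a f1 m = gg a f2 m.
Proof.
elim: f1 f2 m => [|f IH] [|f2] m hm h1 h2 //=; try lia.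
case: ifP => ho //.
have hm2 := odd_double_half m; rewrite ho /= add0n in hm2.
rewrite (IH f2) //; lia.
Qed.

Variable B : nat.
Hypothesis hB : N < Posz B.

Lemma zc_even m : a 0 = false -> a (m + m) = zc a B m (+) zc a B (m + m).
Proof.
move=> h0.
case: m => [[|n]|n].
- by rewrite h0.
- rewrite (_ : Posz n.+1 + Posz n.+1 = Posz (n.+1).*2); last lia.
  rewrite /zc /= -(pp_stable (n := n.+1)) //=; last first.
    have : (B < 2 ^ B)%N := ltn_expl B (ltnSn 1).
    rewrite expnS => hh; nia.
  by rewrite addbK.
- rewrite (_ : Negz n + Negz n = Negz (n.*2.+1)); last by rewrite !NegzE; lia.
  rewrite /zc (gg_S_even a n.*2.+1); last by rewrite /= odd_double.
  rewrite (_ : (n.*2.+2)./2 = n.+1); last by rewrite -doubleS half_double.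
  rewrite (gg_stable (f2 := n.+1)) //; last lia.
  rewrite (_ : - Posz (n.*2.+2) = Negz n.*2.+1); last by rewrite NegzE.
  by rewrite addbC addbK.
Qed.

Lemma zc_big n : Posz B < n -> zc a B n = false.
Proof.
case: n => [n|n] h; last by move: h; rewrite NegzE; lia.
rewrite /zc; case: ifP => // _; apply: pp_zero; lia.
Qed.

Definition zz := LSer (Posz B) (fun k => zc a B (Posz B - k%:Z)).
Definition ww := LSer (Posz B) (fun k => wc a B (Posz B - k%:Z)).

Lemma coef_zz n : coef zz n = zc a B n.
Proof.
case: (lerP n (Posz B)) => h; last by rewrite coef_gt // zc_big.
by have [k ->] := int_split h; rewrite (coef_lead zz k).
Qed.

Lemma coef_ww n : coef ww n = wc a B n.
Proof.
case: (lerP n (Posz B)) => h; last first.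
  by rewrite coef_gt // /wc zc_big ?hN //; lia.
by have [k ->] := int_split h; rewrite (coef_lead ww k).
Qed.

End Constr.

Lemma construct (y : lser) : coef y 0 = false -> exists z w : lser,
  lseq y (ladd (ladd (lmul z z) z) (lmul lt_ (lmul w w))).
Proof.
move=> h0.
have hN : forall i, lead y < i -> coef y i = false by move=> i hi; rewrite coef_gt.
have hB : lead y < Posz (`|lead y|%N + 1) by lia.
exists (zz (coef y) (`|lead y| + 1)), (ww (coef y) (`|lead y| + 1)).
move=> i.
have [m [->|->]] : exists m : int, i = m + m \/ i = m + m + 1 by exists (i %/ 2)%Z; lia.
- rewrite !coef_ladd coef_tmul coef_sq.
  rewrite (_ : m + m - 1 = (m - 1) + (m - 1) + 1); last lia.
  by rewrite coef_sq_odd addbF !(coef_zz hN hB) (zc_even hN hB).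
- rewrite !coef_ladd coef_tmul coef_sq_odd.
  rewrite (_ : m + m + 1 - 1 = m + m); last lia.
  rewrite coef_sq (coef_ww hN hB) (coef_zz hN hB) /wc.
  by case: (coef y _); case: (zc _ _ _).
Qed.

Local Open Scope ring_scope.

Definition lone : lser := LSer 0 (fun k => k == 0%N).

Definition eqm K (p q : {poly 'F_2}) := tr K p = tr K q.

Lemma eqm_refl K p : eqm K p p. Proof. by []. Qed.
Lemma eqm_sym K p q : eqm K p q -> eqm K q p. Proof. by []. Qed.
Lemma eqm_trans K p q r : eqm K p q -> eqm K q r -> eqm K p r.
Proof. by rewrite /eqm => -> . Qed.
Lemma eqmD K p p' q q' : eqm K p p' -> eqm K q q' -> eqm K (p + q) (p' + q').
Proof. by rewrite /eqm !trD => -> ->. Qed.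
Lemma eqmM K p p' q q' : eqm K p p' -> eqm K q q' -> eqm K (p * q) (p' * q').
Proof. by rewrite /eqm => h1 h2; rewrite -trMl h1 trMl -trMr h2 trMr. Qed.

Lemma eqm_mul F1 F2 F K a b : lead a <= F1 -> lead b <= F2 -> F = F1 + F2 ->
  eqm K (phi F K (lmul a b)) (phi F1 K a * phi F2 K b).
Proof. by move=> h1 h2 h3; rewrite /eqm (phi_mul _ h1 h2 h3) trtr. Qed.

Lemma eqm_shift F G (d : nat) K a : lead a <= F -> G = F + d%:Z ->
  eqm K (phi G K a) ('X^d * phi F K a).
Proof. by move=> h1 h2; rewrite /eqm (phi_shift _ h1 h2) trtr. Qed.

Lemma eqm_one K F (n : nat) : F = Posz n -> eqm K (phi F K lone) 'X^n.
Proof.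
move=> ->.
rewrite /eqm tr_phi; apply/polyP => k; rewrite trE coef_poly coefXn; case: ifP => // hk.
rewrite /coef /=; have [->|hne] := eqVneq k n.
  by rewrite subrr lexx.
case: ifP => h //=; case: eqP => // habs.
exfalso; move/eqP: hne; lia.
Qed.

Lemma char2_eq (p q : {poly 'F_2}) : p + q = 0 -> p = q.
Proof. by move=> h; rewrite -[p]addr0 -(two0 q) addrA h add0r. Qed.

Lemma tr0 K : tr K 0 = 0.
Proof. by apply/polyP => k; rewrite trE coef0; case: ifP. Qed.

Lemma eqm_zero K p q r : eqm K p q -> tr K (r * (p + q)) = 0.
Proof. by move=> h; rewrite -trMr trD h two0 mulr0 tr0. Qed.

Lemma key x0 x1 x2 y z w :
  lseq (ladd (ladd (lmul x0 x0) (lmul x0 x1)) (lmul y (lmul x1 x1))) (lmul lt_ (lmul x2 x2)) ->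
  lseq (ladd y lone) (ladd (ladd (lmul z z) z) (lmul lt_ (lmul w w))) ->
  lseq (ladd (ladd (lmul (ladd x0 (lmul z x1)) (ladd x0 (lmul z x1)))
                   (lmul (ladd x0 (lmul z x1)) x1)) (lmul x1 x1))
       (lmul lt_ (lmul (ladd x2 (lmul w x1)) (ladd x2 (lmul w x1)))).
Proof.
move=> hE hH.
have [l [h0 [h1 [h2 [hy [hz [hw hl1]]]]]]] : exists l : nat,
  lead x0 <= Posz l /\ lead x1 <= Posz l /\ lead x2 <= Posz l /\ lead y <= Posz l /\ lead z <= Posz l /\ lead w <= Posz l /\ (1 <= l)%N.
  by exists (`|lead x0| + `|lead x1| + `|lead x2| + `|lead y| + `|lead z| + `|lead w| + 1)%N; repeat split; lia.
have ht : lead lt_ <= Posz l by rewrite /=; lia.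
have hX : lead (ladd x0 (lmul z x1)) <= Posz l + Posz l by rewrite /=; lia.
have hZ : lead (ladd x2 (lmul w x1)) <= Posz l + Posz l by rewrite /=; lia.
apply: (@lseq_of_phi (Posz l + Posz l + Posz l + Posz l + Posz l)); try (rewrite /=; lia).
move=> K.
suff: eqm K (phi (Posz l + Posz l + Posz l + Posz l + Posz l) K
   (ladd (ladd (lmul (ladd x0 (lmul z x1)) (ladd x0 (lmul z x1)))
                   (lmul (ladd x0 (lmul z x1)) x1)) (lmul x1 x1)))
   (phi (Posz l + Posz l + Posz l + Posz l + Posz l) K
   (lmul lt_ (lmul (ladd x2 (lmul w x1)) (ladd x2 (lmul w x1))))).
  by rewrite /eqm !tr_phi.
pose p0 := phi l K x0; pose p1 := phi l K x1; pose p2 := phi l K x2.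
pose py := phi l K y; pose pz := phi l K z; pose pw := phi l K w; pose pt := phi l K lt_.
pose A := 'X^l * p0 + pz * p1.
pose C := 'X^l * p2 + pw * p1.
have eX : eqm K (phi (Posz l + Posz l) K (ladd x0 (lmul z x1))) A.
  rewrite phi_add; apply: eqmD; first by apply: eqm_shift.
  by apply: (eqm_mul (F1 := Posz l) (F2 := Posz l)).
have eZ : eqm K (phi (Posz l + Posz l) K (ladd x2 (lmul w x1))) C.
  rewrite phi_add; apply: eqmD; first by apply: eqm_shift.
  by apply: (eqm_mul (F1 := Posz l) (F2 := Posz l)).
have eXX : eqm K (phi (Posz l + Posz l + Posz l + Posz l + Posz l) K
     (lmul (ladd x0 (lmul z x1)) (ladd x0 (lmul z x1)))) ('X^l * (A * A)).
  apply: eqm_trans; first apply: (eqm_shift (F := Posz l + Posz l + (Posz l + Posz l)) (d := l)).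
  - by rewrite /=; lia.
  - lia.
  apply: eqmM => //; apply: eqm_trans; first by apply: (eqm_mul (F1 := Posz l + Posz l) (F2 := Posz l + Posz l)).
  exact: eqmM.
have eXY : eqm K (phi (Posz l + Posz l + Posz l + Posz l + Posz l) K
     (lmul (ladd x0 (lmul z x1)) x1)) ('X^(l + l) * (A * p1)).
  apply: eqm_trans; first apply: (eqm_shift (F := Posz l + Posz l + Posz l) (d := (l + l)%N)).
  - by rewrite /=; lia.
  - lia.
  apply: eqmM => //; apply: eqm_trans; first by apply: (eqm_mul (F1 := Posz l + Posz l) (F2 := Posz l)).
  exact: eqmM.
have eYY : eqm K (phi (Posz l + Posz l + Posz l + Posz l + Posz l) K
     (lmul x1 x1)) ('X^(l + l + l) * (p1 * p1)).
  apply: eqm_trans; first apply: (eqm_shift (F := Posz l + Posz l) (d := (l + l + l)%N)).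
  - by rewrite /=; lia.
  - lia.
  apply: eqmM => //; by apply: (eqm_mul (F1 := Posz l) (F2 := Posz l)).
have eR : eqm K (phi (Posz l + Posz l + Posz l + Posz l + Posz l) K
   (lmul lt_ (lmul (ladd x2 (lmul w x1)) (ladd x2 (lmul w x1))))) (pt * (C * C)).
  apply: eqm_trans; first apply: (eqm_mul (F1 := Posz l) (F2 := Posz l + Posz l + (Posz l + Posz l))).
  - by [].
  - by rewrite /=; lia.
  - lia.
  apply: eqmM => //; apply: eqm_trans; first by apply: (eqm_mul (F1 := Posz l + Posz l) (F2 := Posz l + Posz l)).
  exact: eqmM.
have eEl : eqm K (phi (Posz l + Posz l + Posz l) K
    (ladd (ladd (lmul x0 x0) (lmul x0 x1)) (lmul y (lmul x1 x1))))
    ('X^l * (p0 * p0) + 'X^l * (p0 * p1) + py * (p1 * p1)).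
  rewrite !phi_add; apply: eqmD; first apply: eqmD.
  - apply: eqm_trans; first apply: (eqm_shift (F := Posz l + Posz l) (d := l)) => //.
    by rewrite /=; lia.
    by apply: eqmM => //; apply: (eqm_mul (F1 := Posz l) (F2 := Posz l)).
  - apply: eqm_trans; first apply: (eqm_shift (F := Posz l + Posz l) (d := l)) => //.
    by rewrite /=; lia.
    by apply: eqmM => //; apply: (eqm_mul (F1 := Posz l) (F2 := Posz l)).
  - apply: eqm_trans; first apply: (eqm_mul (F1 := Posz l) (F2 := Posz l + Posz l)) => //.
    by rewrite /=; lia.
    by lia.
    by apply: eqmM => //; apply: (eqm_mul (F1 := Posz l) (F2 := Posz l)).
have eEr : eqm K (phi (Posz l + Posz l + Posz l) K (lmul lt_ (lmul x2 x2))) (pt * (p2 * p2)).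
  apply: eqm_trans; first apply: (eqm_mul (F1 := Posz l) (F2 := Posz l + Posz l)) => //.
    by rewrite /=; lia.
    by lia.
  by apply: eqmM => //; apply: (eqm_mul (F1 := Posz l) (F2 := Posz l)).
have eHl : eqm K (phi (Posz l + Posz l + Posz l) K (ladd y lone))
    ('X^(l + l) * py + 'X^(l + l + l)).
  rewrite phi_add; apply: eqmD.
    by apply: eqm_shift => //; lia.
  by apply: eqm_one; lia.
have eHr : eqm K (phi (Posz l + Posz l + Posz l) K (ladd (ladd (lmul z z) z) (lmul lt_ (lmul w w))))
    ('X^l * (pz * pz) + 'X^(l + l) * pz + pt * (pw * pw)).
  rewrite !phi_add; apply: eqmD; first apply: eqmD.
  - apply: eqm_trans; first apply: (eqm_shift (F := Posz l + Posz l) (d := l)) => //.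
    by rewrite /=; lia.
    by apply: eqmM => //; apply: (eqm_mul (F1 := Posz l) (F2 := Posz l)).
  - by apply: eqm_shift => //; lia.
  - apply: eqm_trans; first apply: (eqm_mul (F1 := Posz l) (F2 := Posz l + Posz l)) => //.
    by rewrite /=; lia.
    by lia.
    by apply: eqmM => //; apply: (eqm_mul (F1 := Posz l) (F2 := Posz l)).
have hEm := eqm_trans (eqm_trans (eqm_sym eEl) (congr1 (tr K) (phi_lseq (Posz l + Posz l + Posz l) K hE))) eEr.
have hHm := eqm_trans (eqm_trans (eqm_sym eHl) (congr1 (tr K) (phi_lseq (Posz l + Posz l + Posz l) K hH))) eHr.
rewrite !phi_add.
apply: eqm_trans; first by apply: eqmD; first apply: eqmD; [exact: eXX|exact: eXY|exact: eYY].
apply: eqm_sym; apply: eqm_trans; first exact: eR.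
apply: eqm_sym; rewrite /eqm; apply: char2_eq; rewrite -trD.
set El := _ + _ + py * (p1 * p1) in hEm.
set Er := pt * (p2 * p2) in hEm.
set Hl := _ + 'X^(l + l + l) in hHm.
set Hr := _ + _ + pt * (pw * pw) in hHm.
have -> : 'X^l * (A * A) + 'X^(l + l) * (A * p1) + 'X^(l + l + l) * (p1 * p1) + pt * (C * C) =
  'X^(l + l) * (El + Er) + p1 * p1 * (Hl + Hr).
  apply: char2_eq.
  have -> : 'X^l * (A * A) + 'X^(l + l) * (A * p1) + 'X^(l + l + l) * (p1 * p1) + pt * (C * C) +
    ('X^(l + l) * (El + Er) + p1 * p1 * (Hl + Hr)) =
  ('X^l ^+ 3 * p0 ^+ 2 + 'X^l ^+ 2 * p0 * pz * p1 + 'X^l * pz ^+ 2 * p1 ^+ 2 + 'X^l ^+ 3 * p0 * p1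
   + 'X^l ^+ 2 * pz * p1 ^+ 2 + 'X^l ^+ 3 * p1 ^+ 2 + pt * 'X^l ^+ 2 * p2 ^+ 2
   + pt * 'X^l * p2 * pw * p1 + pt * pw ^+ 2 * p1 ^+ 2 + 'X^l ^+ 2 * py * p1 ^+ 2) *+ 2.
    rewrite /El /Er /Hl /Hr /A /C !exprD; ring.
  by rewrite mulr2n two0.
by rewrite trD eqm_zero // eqm_zero // addr0.
Qed.

Local Open Scope ring_scope.

Definition zero (a : lser) := forall i, coef a i = false.

Lemma zero_lzero a : zero a -> lseq a lzero.
Proof. by move=> h i; rewrite h /coef; case: ifP. Qed.

Lemma mul_zero_r a b : zero b -> zero (lmul a b).
Proof.
move=> h i; rewrite (lmul_congr (fun i => erefl (coef a i)) (zero_lzero h)).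
rewrite /coef; case: ifP => // _ /=; rewrite big1 // => j _; by rewrite andbF.
Qed.

Lemma mul_zero_l a b : zero a -> zero (lmul a b).
Proof.
move=> h i; rewrite (lmul_congr (zero_lzero h) (fun i => erefl (coef b i))).
rewrite /coef; case: ifP => // _ /=; rewrite big1 // => j _; by [].
Qed.

Definition istop (a : lser) m := coef a m = true /\ forall i, m < i -> coef a i = false.

Lemma top_ex a i0 : coef a i0 = true -> exists m, istop a m.
Proof.
move=> h0.
have hi0 : i0 <= lead a.
  by case: (lerP i0 (lead a)) => // hlt; rewrite coef_gt in h0.
have hex : exists k : nat, coef a (lead a - k%:Z) by exists `|lead a - i0|%N; rewrite (_ : _ - _ = i0) //; lia.
have [k0 Pk0 hmin] := ex_minnP hex.
exists (lead a - k0%:Z); split => // i hi.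
case: (lerP i (lead a)) => hl; last by rewrite coef_gt.
have [k ek] := int_split hl.
apply/negbTE/negP => hc.
have := hmin k; rewrite -ek => /(_ hc); lia.
Qed.

Lemma top_mul a b ma mb : istop a ma -> istop b mb -> istop (lmul a b) (ma + mb).
Proof.
move=> [ha1 ha2] [hb1 hb2].
pose na := LSer ma (fun k => coef a (ma - k%:Z)).
pose nb := LSer mb (fun k => coef b (mb - k%:Z)).
have ea : lseq a na.
  move=> i; case: (lerP i ma) => hl; last by rewrite ha2 // coef_gt.
  by have [k ->] := int_split hl; rewrite (coef_lead na k).
have eb : lseq b nb.
  move=> i; case: (lerP i mb) => hl; last by rewrite hb2 // coef_gt.
  by have [k ->] := int_split hl; rewrite (coef_lead nb k).
have e := lmul_congr ea eb.
split; last by move=> i hi; rewrite e coef_gt.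
rewrite e (_ : ma + mb = lead (lmul na nb) - 0%:Z); last by rewrite /= subr0.
by rewrite coef_lead /= big_ord_recl big_ord0 /= !subr0 ha1 hb1.
Qed.

Lemma zero_or (a : lser) : zero a \/ exists i, coef a i = true.
Proof.
case: (classic (exists i, coef a i = true)) => h; [by right|left => i].
by apply/negbTE/negP => hc; apply: h; exists i.
Qed.

Lemma final X Y Z :
  lseq (ladd (ladd (lmul X X) (lmul X Y)) (lmul Y Y)) (lmul lt_ (lmul Z Z)) ->
  zero X /\ zero Y /\ zero Z.
Proof.
move=> hG.
have hev : forall m, coef (ladd (ladd (lmul X X) (lmul X Y)) (lmul Y Y)) (m + m) = false.
  move=> m; rewrite hG coef_tmul (_ : m + m - 1 = (m - 1) + (m - 1) + 1); last lia.
  by rewrite coef_sq_odd.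
have [hX|[iX hX]] := zero_or X; have [hY|[iY hY]] := zero_or Y.
- split => //; split => // i; apply/negbTE/negP => hc.
  have := hG (i + i + 1).
  by rewrite !coef_ladd coef_tmul (_ : i + i + 1 - 1 = i + i); [rewrite coef_sq hc !mul_zero_l| lia].
- exfalso; have [mY tY] := top_ex hY.
  have := hev mY; rewrite !coef_ladd (@mul_zero_l X X hX) (@mul_zero_l X Y hX) (proj1 (top_mul tY tY)).
  by [].
- exfalso; have [mX tX] := top_ex hX.
  have := hev mX; rewrite !coef_ladd (@mul_zero_r X Y hY) (@mul_zero_r Y Y hY) (proj1 (top_mul tX tX)).
  by [].
- exfalso; have [mX tX] := top_ex hX; have [mY tY] := top_ex hY.
  case: (ltgtP mX mY) => hm.
  + have := hev mY; rewrite !coef_ladd (proj1 (top_mul tY tY)).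
    rewrite (proj2 (top_mul tX tX)); last lia.
    by rewrite (proj2 (top_mul tX tY)); last lia.
  + have := hev mX; rewrite !coef_ladd (proj1 (top_mul tX tX)).
    rewrite (proj2 (top_mul tY tY)); last lia.
    by rewrite (proj2 (top_mul tX tY)); last lia.
  + subst mY; have := hev mX; rewrite !coef_ladd (proj1 (top_mul tX tX)).
    by rewrite (proj1 (top_mul tY tY)) (proj1 (top_mul tX tY)).
Qed.

Lemma dig_one1 k : dig (lmul lone lone) k = (k == 0%N).
Proof.
rewrite -(coef_lead (lmul lone lone) k) (@coef_mul_unit lone lone) //.
by rewrite /= add0r -(add0r (- _)) (coef_lead lone k).
Qed.

Theorem lemma3p7 (y : lser) : conic_has_point y <-> coef y 0%R = false.
Proof.
split.
- move=> [x0 [x1 [x2 [hnt hE]]]].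
  case hy0 : (coef y 0) => //; exfalso.
  have hy' : coef (ladd y lone) 0 = false by rewrite coef_ladd hy0.
  have [z [w hH]] := construct hy'.
  have [hX [hY hZ]] := final (key hE hH).
  have h0 : zero x0.
    move=> i; have := hX i; rewrite coef_ladd (mul_zero_r _ hY).
    by rewrite addbF.
  have h2 : zero x2.
    move=> i; have := hZ i; rewrite coef_ladd (mul_zero_r _ hY).
    by rewrite addbF.
  by case: hnt => [[i hi]|[[i hi]|[i hi]]]; [rewrite h0 in hi|rewrite hY in hi|rewrite h2 in hi].
- move=> hy0.
  have [z [w hH]] := construct hy0.
  exists z, lone, w; split; first by right; left; exists 0.
  move=> i; rewrite !coef_ladd (@coef_mul_unit z lone) // (@coef_mul_unit y (lmul lone lone)) //; last exact: dig_one1.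
  rewrite hH !coef_ladd.
  by case: (coef (lmul z z) i); case: (coef z i); case: (coef (lmul lt_ (lmul w w)) i).
Qed.
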